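(* Consider $\dot y=A(t)y+B(t)(u+\Delta(y,t))$, $y\in\mathbb{R}^{\bar n}$, $u\in\mathbb{R}^{\bar m}$, with continuous, bounded, $T$-periodic $A,B$ and unknown bounded $\Delta$, and a continuous $T$-periodic $K(t)$ such that the origin of $\dot\chi=A^{cl}(t)\chi$, $A^{cl}=A+BK$, is exponentially stable, with state-transition matrix $\Psi_{A^{cl}}$. Let $(L(t),F)$ be a real $cT$-periodic Floquet--Lyapunov factorization of this closed-loop system for some positive integer $c$, i.e. $\Psi_{A^{cl}}(t,0)=L(t)e^{Ft}$ with $F$ real constant and $L$ real, nonsingular, $\mathcal{C}^1$, $L(t+cT)=L(t)$. Suppose $F$ has a real invariant subspace $\Lambda$ of codimension $\bar m$ ($F\Lambda\subseteq\Lambda$), and let $\hat S\in\mathbb{R}^{\bar m\times\bar n}$ be a full-rank left annihilator of $\Lambda$. If $S(t):=\hat S L^{-1}(t)$ satisfies $\operatorname{rank}[S(t)B(t)]=\bar m$ for all $t\in[0,cT)$, then forward invariance of $S(t)y(t)\equiv0$ for $t\ge t_0$ corresponds to the system experiencing the equivalent control $u_{eq}(t)=K(t)y(t)-\Delta(y(t),t)$ for all $t\ge t_0$.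
   Context: Equivalent control: the control obtained from requiring $\frac{d}{dt}(S(t)y(t))\equiv0$ along motions satisfying $S(t)y(t)=0$. *)

(* Defs.v *)
From HB Require Import structures.
From mathcomp Require Import all_boot all_order all_algebra.
From mathcomp Require Import all_classical all_reals all_analysis.
Set Implicit Arguments. Unset Strict Implicit. Unset Printing Implicit Defensive.
Import Order.TTheory GRing.Theory Num.Theory.
Import numFieldNormedType.Exports.
Local Open Scope ring_scope.

Definition mx_has_deriv (R : realType) (p q : nat)
  (f : R -> 'M[R]_(p, q)) (t : R) (D : 'M[R]_(p, q)) : Prop :=
  forall i j, is_derive t 1 (fun s => f s i j) (D i j).

Definition mx_continuous (R : realType) (p q : nat) (f : R -> 'M[R]_(p, q)) : Prop :=
  forall i j, continuous (fun t => f t i j).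

Definition mx_bounded (R : realType) (p q : nat) (f : R -> 'M[R]_(p, q)) : Prop :=
  exists M : R, forall t i j, `|f t i j| <= M.

Definition mx_periodic (R : realType) (p q : nat) (P : R) (f : R -> 'M[R]_(p, q)) : Prop :=
  forall t, f (t + P) = f t.

Definition mx_C1 (R : realType) (p q : nat) (f : R -> 'M[R]_(p, q)) : Prop :=
  exists f' : R -> 'M[R]_(p, q),
    (forall t, mx_has_deriv f t (f' t)) /\ mx_continuous f'.

Definition is_state_transition (R : realType) (n : nat)
  (Acl : R -> 'M[R]_n) (Psi : R -> R -> 'M[R]_n) : Prop :=
  (forall s, Psi s s = 1%:M) /\
  (forall t s, mx_has_deriv (fun tau => Psi tau s) t (Acl t *m Psi t s)).

(* E(t) = e^{F t}: the matrix exponential, i.e. the solution of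
   E(0) = I, E'(t) = F E(t). *)
Definition is_mexp (R : realType) (n : nat) (F : 'M[R]_n) (E : R -> 'M[R]_n) : Prop :=
  E 0 = 1%:M /\ (forall t, mx_has_deriv E t (F *m E t)).

Definition exp_stable_tm (R : realType) (n : nat) (Psi : R -> R -> 'M[R]_n) : Prop :=
  exists k lam : R, 0 < k /\ 0 < lam /\
    forall t s, s <= t -> forall i j, `|Psi t s i j| <= k * expR (- (lam * (t - s))).

(* Main.v *)
Require Import Defs.
From HB Require Import structures.
From mathcomp Require Import all_boot all_order all_algebra.
From mathcomp Require Import all_classical all_reals all_analysis.
From mathcomp Require Import lra.
Import Order.TTheory GRing.Theory Num.Theory.
Import numFieldNormedType.Exports.
Local Open Scope ring_scope.

Lemma exists_G (R : realType) n m (F Lam : 'M[R]_n) (Shat : 'M[R]_(m,n)) :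
  \rank Lam = (n-m)%N -> (Lam *m F^T <= Lam)%MS -> \rank Shat = m ->
  Shat *m Lam^T = 0 -> exists G : 'M[R]_m, Shat *m F = G *m Shat.
Proof.
move=> rL sLF rS S0.
have sS : (Shat <= kermx Lam^T)%MS by rewrite sub_kermx S0.
have mn : (m <= n)%N by rewrite -rS rank_leq_col.
have rk : \rank (kermx Lam^T) = m.
  by rewrite mxrank_ker mxrank_tr rL subKn.
have sK : (kermx Lam^T <= Shat)%MS.
  by case: (mxrank_leqif_sup sS) => _ <-; rewrite rk rS.
have sSF : (Shat *m F <= Shat)%MS.
  apply: submx_trans sK; rewrite sub_kermx.
  case/submxP: sLF => D HD.
  have HE : F *m Lam^T = Lam^T *m D^T by rewrite -[F]trmxK -trmx_mul HD trmx_mul.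
  by rewrite -mulmxA HE mulmxA S0 mul0mx.
by exists (Shat *m F *m pinvmx Shat); rewrite mulmxKpV.
Qed.

Section Tools.
Variable R : realType.

Lemma is_derive_ext (f g : R -> R) (x : R) (df : R) :
  (forall s, f s = g s) -> is_derive x 1 f df -> is_derive x 1 g df.
Proof. by move=> fg; have -> : f = g by apply/funext. Qed.

Lemma is_derive_uniq (f : R -> R) (x : R) (a b : R) :
  is_derive x 1 f a -> is_derive x 1 f b -> a = b.
Proof. by move=> Ha Hb; rewrite -(derive_val (is_derive := Ha)) (derive_val (is_derive := Hb)). Qed.

Lemma is_derive_c (x k : R) : is_derive x 1 (fun _ : R => k) 0.
Proof. exact: is_derive_cst. Qed.

Lemma is_derive_add (f g : R -> R) (x df dg : R) :
  is_derive x 1 f df -> is_derive x 1 g dg ->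
  is_derive x 1 (fun s => f s + g s) (df + dg).
Proof. move=> Hf Hg; exact: (is_deriveD Hf Hg). Qed.

Lemma is_derive_mul (f g : R -> R) (x df dg : R) :
  is_derive x 1 f df -> is_derive x 1 g dg ->
  is_derive x 1 (fun s => f s * g s) (f x * dg + g x * df).
Proof. move=> Hf Hg; exact: (is_deriveM Hf Hg). Qed.

Lemma is_derive_sumseq (I : Type) (r : seq I) (P : pred I) (f : I -> R -> R)
  (df : I -> R) (x : R) :
  (forall i, P i -> is_derive x 1 (f i) (df i)) ->
  is_derive x 1 (fun s => \sum_(i <- r | P i) f i s) (\sum_(i <- r | P i) df i).
Proof.
move=> H; elim: r => [|a r IH].
  apply: (@is_derive_ext (fun _ => 0)); first by move=> s; rewrite big_nil.
  rewrite big_nil; exact: is_derive_c.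
case Pa: (P a).
  apply: (@is_derive_ext (fun s => f a s + \sum_(i <- r | P i) f i s)).
    by move=> s; rewrite big_cons Pa.
  rewrite big_cons Pa; apply: is_derive_add => //; exact: H.
apply: (@is_derive_ext (fun s => \sum_(i <- r | P i) f i s)).
  by move=> s; rewrite big_cons Pa.
by rewrite big_cons Pa.
Qed.

Lemma mx_deriv_cst p q (C : 'M[R]_(p, q)) t : mx_has_deriv (fun _ => C) t 0.
Proof. by move=> i j; rewrite mxE; exact: is_derive_c. Qed.

Lemma mx_deriv_mul p q r (X : R -> 'M[R]_(p, q)) (Y : R -> 'M[R]_(q, r)) t DX DY :
  mx_has_deriv X t DX -> mx_has_deriv Y t DY ->
  mx_has_deriv (fun s => X s *m Y s) t (DX *m Y t + X t *m DY).
Proof.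
move=> HX HY i j.
apply: (@is_derive_ext (fun s => \sum_(k < q) X s i k * Y s k j)).
  by move=> s; rewrite mxE.
have -> : (DX *m Y t + X t *m DY) i j =
   \sum_(k < q) (X t i k * DY k j + Y t k j * DX i k).
  rewrite !mxE big_split /= addrC; congr (_ + _); apply: eq_bigr => k _.
  by rewrite mulrC.
apply: is_derive_sumseq => k _; exact: is_derive_mul.
Qed.

Lemma mx_deriv_add p q (X Y : R -> 'M[R]_(p, q)) t DX DY :
  mx_has_deriv X t DX -> mx_has_deriv Y t DY ->
  mx_has_deriv (fun s => X s + Y s) t (DX + DY).
Proof.
move=> HX HY i j.
apply: (@is_derive_ext (fun s => X s i j + Y s i j)).
  by move=> s; rewrite mxE.
rewrite mxE; exact: is_derive_add.
Qed.

Lemma mx_deriv_ext p q (X Y : R -> 'M[R]_(p, q)) t D :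
  (forall s, X s = Y s) -> mx_has_deriv X t D -> mx_has_deriv Y t D.
Proof. by move=> XY; have -> : X = Y by apply/funext. Qed.

Lemma mx_deriv_uniq p q (X : R -> 'M[R]_(p, q)) t D1 D2 :
  mx_has_deriv X t D1 -> mx_has_deriv X t D2 -> D1 = D2.
Proof. by move=> H1 H2; apply/matrixP => i j; exact: is_derive_uniq (H1 i j) (H2 i j). Qed.

End Tools.
Section T.
Local Open Scope classical_set_scope.
Variable R : realType.
Lemma deriv_right0 (f : R -> R) (x D : R) : is_derive x 1 f D ->
  (forall s, x <= s -> f s = 0) -> D = 0.
Proof.
move=> H f0.
have dv : derivable f x 1 by case: H.
have HD : 'D_1 f x = D by case: H.
set g := (fun h : R => h^-1 *: ((f \o shift x) (h *: 1) - f x)).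
have Hl : g @ 0^' --> D by rewrite -HD; exact: dv.
have Hr : g @ 0^'+ --> D.
  move=> P /Hl /=; rewrite /dnbhs /at_right /within /=.
  rewrite /nbhs /=; apply: filterS => y Hy yp; apply: Hy; by rewrite gt_eqF.
have H0 : g @ 0^'+ --> 0.
  apply: cvg_near_cst; near=> h.
  rewrite /g /= !f0 ?subrr ?scaler0 //.
  rewrite lerDr -[h%:A]/(h * 1) mulr1; apply: ltW; near: h; exact: nbhs_right_gt.
exact: (cvg_unique _ Hr H0).
Unshelve. all: by end_near.
Qed.
End T.

Section U.
Variable R : realType.

Lemma quad_ineq p q (G : 'M[R]_p) (a : 'M[R]_(p, q)) (M : R) :
  (forall i k, `|G i k| <= M) ->
  \sum_i \sum_j (a i j * (G *m a) i j + a i j * (G *m a) i j) <=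
  M * ((\sum_i \sum_j a i j * a i j) *+ p + (\sum_i \sum_j a i j * a i j) *+ p).
Proof.
move=> HM.
apply: (@le_trans _ _ (\sum_(i < p) \sum_(j < q) \sum_(k < p)
    M * (a i j * a i j + a k j * a k j))).
  apply: ler_sum => i _; apply: ler_sum => j _.
  rewrite mxE -mulr2n mulr_sumr -sumrMnl; apply: ler_sum => k _.
  have := HM i k; rewrite ler_norml => /andP[h1 h2].
  rewrite mulr2n.
  move: (G i k) (a i j) (a k j) h1 h2 => g x y h1 h2.
  have h3 : 0 <= (M + g) * ((x - y) * (x - y)) by apply: mulr_ge0; [lra| rewrite -expr2 sqr_ge0].
  have h4 : 0 <= (M - g) * ((x + y) * (x + y)) by apply: mulr_ge0; [lra| rewrite -expr2 sqr_ge0].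
  nra.
rewrite le_eqVlt; apply/orP; left; apply/eqP.
set N := \sum_i \sum_j a i j * a i j.
have E1 : \sum_(i < p) \sum_(j < q) \sum_(k < p) M * (a i j * a i j) = M * (N *+ p).
  rewrite mulrnAr /N mulr_sumr -sumrMnl; apply: eq_bigr => i _.
  rewrite mulr_sumr -sumrMnl; apply: eq_bigr => j _.
  by rewrite sumr_const card_ord.
have E2 : \sum_(i < p) \sum_(j < q) \sum_(k < p) M * (a k j * a k j) = M * (N *+ p).
  rewrite sumr_const card_ord mulrnAr; congr (_ *+ _).
  rewrite /N exchange_big /= mulr_sumr; apply: eq_bigr => k _.
  by rewrite mulr_sumr.
rewrite mulrDr -{1}E1 -E2 -big_split /=; apply: eq_bigr => i _.
rewrite -big_split /=; apply: eq_bigr => j _.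
rewrite -big_split /=; apply: eq_bigr => k _.
by rewrite mulrDr.
Qed.

Lemma is_derive_lin (k x : R) : is_derive x 1 (fun s : R => k * s) k.
Proof.
have H := @is_derive_mul R (fun _ => k) id x 0 1 (@is_derive_c R x k) (is_derive_id x 1).
by rewrite mulr1 mulr0 addr0 in H.
Qed.

Lemma is_derive_expk (k x : R) :
  is_derive x 1 (fun s => expR (k * s)) (expR (k * x) * k).
Proof.
exact: (is_derive1_comp (f := expR) (g := fun s => k * s) (is_derive_expR (k * x)) (is_derive_lin k x)).
Qed.

Lemma ode_uniq p q (G : 'M[R]_p) (X : R -> 'M[R]_(p, q)) (t0 : R) :
  (forall t, t0 <= t -> mx_has_deriv X t (G *m X t)) -> X t0 = 0 ->
  forall t, t0 <= t -> X t = 0.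
Proof.
move=> HX X0 t tt0.
pose M := \sum_i \sum_k `|G i k|.
have HM : forall i k, `|G i k| <= M.
  move=> i k; rewrite /M (bigD1 i) //= (bigD1 k) //= -addrA lerDl.
  apply: addr_ge0; first by apply: sumr_ge0 => *.
  by apply: sumr_ge0 => *; apply: sumr_ge0 => *.
pose N := fun s => \sum_i \sum_j X s i j * X s i j.
pose dN := fun s => \sum_i \sum_j (X s i j * (G *m X s) i j + X s i j * (G *m X s) i j).
have HdN : forall s, t0 <= s -> is_derive s 1 N (dN s).
  move=> s ts; apply: is_derive_sumseq => i _; apply: is_derive_sumseq => j _.
  exact: is_derive_mul (HX s ts i j) (HX s ts i j).
pose C := M * (p%:R + p%:R).
have ineq : forall s, dN s <= C * N s.
  move=> s; apply: le_trans (@quad_ineq _ _ G (X s) M HM) _.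
  by rewrite /C /N -mulrA mulrDl !mulr_natl.
pose k := - C.
pose phi := fun s => expR (k * s) * N s.
pose dphi := fun s => expR (k * s) * dN s + N s * (expR (k * s) * k).
have Hphi : forall s, t0 <= s -> is_derive s 1 phi (dphi s).
  move=> s ts; exact: is_derive_mul (is_derive_expk k s) (HdN s ts).
have dphi_le : forall s, dphi s <= 0.
  move=> s; rewrite /dphi mulrCA -mulrDr; apply: mulr_ge0_le0.
    apply/ltW; exact: expR_gt0.
  by rewrite /k mulrN mulrC subr_le0; exact: ineq s.
have N0 : N t0 = 0.
  by rewrite /N X0; apply: big1 => i _; apply: big1 => j _; rewrite mxE mulr0.
have Nge0 : forall s, 0 <= N s.
  by move=> s; apply: sumr_ge0 => i _; apply: sumr_ge0 => j _; rewrite -expr2 sqr_ge0.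
have Nt : N t = 0.
  case: (eqVneq t t0) => [-> //|tnt0].
  have tlt : t0 < t by rewrite lt_def tnt0 tt0.
  have [c cI Hc] : exists2 c, c \in `]t0, t[ & phi t - phi t0 = dphi c * (t - t0).
    apply: MVT tlt _ _.
      by move=> x; rewrite in_itv /= => /andP[x1 _]; exact: Hphi (ltW x1).
    apply: derivable_within_continuous => x; rewrite in_itv /= => /andP[x1 _].
    by case: (Hphi x x1).
  have : phi t <= 0.
      have : phi t - phi t0 <= 0.
      rewrite Hc; apply: mulr_le0_ge0 => //; by rewrite subr_ge0 ltW.
    by rewrite /phi N0 mulr0 subr0.
  rewrite /phi pmulr_rle0 ?expR_gt0 // => Nle.
  by apply/eqP; rewrite eq_le Nle Nge0.
apply/matrixP => i j; rewrite mxE.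
move/eqP: Nt; rewrite psumr_eq0; last first.
  by move=> i0 _; apply: sumr_ge0 => j0 _; rewrite -expr2 sqr_ge0.
move/allP/(_ i (mem_index_enum _)); rewrite implyTb psumr_eq0; last first.
  by move=> j0 _; rewrite -expr2 sqr_ge0.
move/allP/(_ j (mem_index_enum _)); rewrite implyTb mulf_eq0 orbb.
by move/eqP.
Qed.
End U.

Set Implicit Arguments. Unset Strict Implicit.
Arguments mx_deriv_mul {R p q r X Y t DX DY}.
Arguments mx_deriv_add {R p q X Y t DX DY}.
Arguments mx_deriv_cst {R p q} C t.
Arguments mx_deriv_ext {R p q X Y t D}.
Arguments mx_deriv_uniq {R p q X t D1 D2}.
Arguments is_derive_ext {R f g x df}.
Arguments is_derive_uniq {R f x a b}.
Arguments is_derive_add {R f g x df dg}.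
Arguments is_derive_mul {R f g x df dg}.
Arguments is_derive_c {R} x k.
Arguments ode_uniq {R p q G X t0}.
Arguments deriv_right0 {R f x D}.
Section V.
Variable R : realType.

Lemma is_derive_shiftc (f : R -> R) (x b a : R) :
  is_derive (x + b) 1 f a -> is_derive x 1 (fun s => f (s + b)) a.
Proof.
move=> H.
have Hg : is_derive x 1 (fun s : R => s + b) 1.
  have := @is_derive_add R id (fun _ => b) x 1 0 (is_derive_id x 1) (is_derive_c x b).
  by rewrite addr0.
have := is_derive1_comp (f := f) (g := fun s => s + b) H Hg; rewrite mulr1; exact.
Qed.

Lemma is_derive_sub (f g : R -> R) (x df dg : R) :
  is_derive x 1 f df -> is_derive x 1 g dg ->
  is_derive x 1 (fun s => f s - g s) (df - dg).
Proof. move=> Hf Hg; exact: (is_deriveB Hf Hg). Qed.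

Lemma mx_deriv_sub p q (X Y : R -> 'M[R]_(p, q)) t DX DY :
  mx_has_deriv X t DX -> mx_has_deriv Y t DY ->
  mx_has_deriv (fun s => X s - Y s) t (DX - DY).
Proof.
move=> HX HY i j.
apply: (@is_derive_ext R (fun s => X s i j - Y s i j)).
  by move=> s; rewrite !mxE.
rewrite !mxE; exact: is_derive_sub.
Qed.

Lemma mx_deriv_shift p q (X : R -> 'M[R]_(p, q)) t b D :
  mx_has_deriv X (t + b) D -> mx_has_deriv (fun s => X (s + b)) t D.
Proof. by move=> H i j; exact: (@is_derive_shiftc (fun s => X s i j) t b (D i j) (H i j)). Qed.

Lemma mexp_unit n (F : 'M[R]_n) (E : R -> 'M[R]_n) :
  is_mexp F E -> forall t, E t \in unitmx.
Proof.
move=> [E0 HE].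
have prod : forall a b, 0 <= a -> E (a + b) = E a *m E b.
  move=> a b a0.
  have H0 : forall s, 0 <= s -> mx_has_deriv (fun s => E (s + b) - E s *m E b) s
      (F *m (E (s + b) - E s *m E b)).
    move=> s _.
    have H := mx_deriv_sub (mx_deriv_shift (HE (s + b)))
                 (mx_deriv_mul (HE s) (mx_deriv_cst (E b) s)).
    by rewrite mulmx0 addr0 -mulmxA -mulmxBr in H.
  have X0 : E (0 + b) - E 0 *m E b = 0 by rewrite add0r E0 mul1mx subrr.
  have := @ode_uniq R n n F (fun s => E (s + b) - E s *m E b) 0 H0 X0 a a0.
  by move=> /= /eqP; rewrite subr_eq0 => /eqP.
have pos : forall a, 0 <= a -> E a \in unitmx /\ E (- a) \in unitmx.
  move=> a a0; apply: mulmx1_unit; by rewrite -prod // subrr.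
move=> t; case: (lerP 0 t) => t0; first by case: (pos t t0).
have := pos (- t); rewrite opprK oppr_ge0 => /(_ (ltW t0)) [].
done.
Qed.

End V.
Set Implicit Arguments. Unset Strict Implicit.
Arguments mx_deriv_mul {R p q r X Y t DX DY}.
Arguments mx_deriv_add {R p q X Y t DX DY}.
Arguments mx_deriv_cst {R p q} C t.
Arguments mx_deriv_ext {R p q X Y t D}.
Arguments mx_deriv_uniq {R p q X t D1 D2}.
Arguments is_derive_ext {R f g x df}.
Arguments is_derive_uniq {R f x a b}.
Arguments is_derive_add {R f g x df dg}.
Arguments is_derive_mul {R f g x df dg}.
Arguments is_derive_c {R} x k.
Arguments ode_uniq {R p q G X t0}.
Arguments deriv_right0 {R f x D}.

Section W.
Variable R : realType.

Lemma derivable_ext (f g : R -> R) (x : R) :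
  (forall s, f s = g s) -> derivable f x 1 -> derivable g x 1.
Proof. by move=> fg; have -> : f = g by apply/funext. Qed.

Lemma derivable_mul2 (f g : R -> R) (x : R) :
  derivable f x 1 -> derivable g x 1 -> derivable (fun s => f s * g s) x 1.
Proof. by move=> Hf Hg; case: (is_derive_mul (derivableP Hf) (derivableP Hg)). Qed.

Lemma derivable_c (x k : R) : derivable (fun _ : R => k) x 1.
Proof. by case: (is_derive_c x k). Qed.

Lemma ex_derive_sum (I : Type) (r : seq I) (P : pred I) (f : I -> R -> R) (x : R) :
  (forall i, P i -> derivable (f i) x 1) ->
  derivable (fun s => \sum_(i <- r | P i) f i s) x 1.
Proof.
move=> H.
by case: (@is_derive_sumseq R I r P f (fun i => 'D_1 (f i) x) x
   (fun i Pi => derivableP (H i Pi))).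
Qed.

Lemma ex_derive_prod (I : Type) (r : seq I) (P : pred I) (f : I -> R -> R) (x : R) :
  (forall i, P i -> derivable (f i) x 1) ->
  derivable (fun s => \prod_(i <- r | P i) f i s) x 1.
Proof.
move=> H; elim: r => [|a r IH].
  apply: (@derivable_ext (fun _ => 1)); first by move=> s; rewrite big_nil.
  exact: derivable_c.
case Pa: (P a).
  apply: (@derivable_ext (fun s => f a s * \prod_(i <- r | P i) f i s)).
    by move=> s; rewrite big_cons Pa.
  by apply: derivable_mul2 => //; exact: H.
apply: (@derivable_ext (fun s => \prod_(i <- r | P i) f i s)) => //.
by move=> s; rewrite big_cons Pa.
Qed.

Lemma det_derivable n (M : R -> 'M[R]_n) (x : R) :
  (forall i j, derivable (fun s => M s i j) x 1) ->
  derivable (fun s => \det (M s)) x 1.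
Proof.
move=> H.
rewrite /determinant.
apply: ex_derive_sum => z _; apply: derivable_mul2; first exact: derivable_c.
by apply: ex_derive_prod => i _; exact: H.
Qed.

Lemma invmx_derivable n (L : R -> 'M[R]_n) (x : R) :
  (forall s, L s \in unitmx) -> (forall i j, derivable (fun s => L s i j) x 1) ->
  forall i j, derivable (fun s => invmx (L s) i j) x 1.
Proof.
move=> U H i j.
apply: (@derivable_ext (fun s => (\det (L s))^-1 *
   ((-1) ^+ (j + i) * \det (row' j (col' i (L s)))))).
  by move=> s; rewrite /invmx U !mxE /cofactor.
apply: derivable_mul2.
  apply: derivableV; last exact: det_derivable.
  by have := U x; rewrite unitmxE unitfE.
apply: derivable_mul2; first exact: derivable_c.
apply: det_derivable => a b.
apply: (@derivable_ext (fun s => L s (lift j a) (lift i b))); last exact: H.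
by move=> s; rewrite !mxE.
Qed.

Lemma inv_deriv n (L Ld : R -> 'M[R]_n) :
  (forall s, L s \in unitmx) -> (forall t, mx_has_deriv L t (Ld t)) ->
  forall t, mx_has_deriv (fun s => invmx (L s)) t
     (- (invmx (L t) *m Ld t *m invmx (L t))).
Proof.
move=> U HL t.
have dv : forall i j, derivable (fun s => invmx (L s) i j) t 1.
  by apply: invmx_derivable => // i j; case: (HL t i j).
pose D := \matrix_(i, j) 'D_1 (fun s => invmx (L s) i j) t.
have HD : mx_has_deriv (fun s => invmx (L s)) t D.
  by move=> i j; rewrite mxE; exact: derivableP.
have Hprod := mx_deriv_mul (HL t) HD.
have Hc : mx_has_deriv (fun s => L s *m invmx (L s)) t 0.
  apply: (mx_deriv_ext _ (mx_deriv_cst 1%:M t)) => s.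
  by rewrite mulmxV.
have E := mx_deriv_uniq Hprod Hc.
suff -> : - (invmx (L t) *m Ld t *m invmx (L t)) = D by [].
have E2 : L t *m D = - (Ld t *m invmx (L t)).
  by apply/eqP; rewrite -addr_eq0 addrC E.
by rewrite -[D](mulKmx (U t)) E2 mulmxN mulmxA.
Qed.

End W.
Set Implicit Arguments. Unset Strict Implicit.

Section P.
Variable R : realType.

Lemma per_nat p q (P : R) (f : R -> 'M[R]_(p, q)) : mx_periodic P f ->
  forall (n : nat) t, f (t + n%:R * P) = f t.
Proof.
move=> H; elim=> [|n IH] t; first by rewrite mul0r addr0.
by rewrite -addn1 natrD mulrDl mul1r addrA H IH.
Qed.

Lemma per_int p q (P : R) (f : R -> 'M[R]_(p, q)) : mx_periodic P f ->
  forall (z : int) t, f (t + z%:~R * P) = f t.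
Proof.
move=> H [n|n] t.
  by rewrite -(per_nat H n t).
rewrite NegzE mulNr -[in RHS](subrK ((n.+1)%:R * P) t).
by rewrite (per_nat H).
Qed.

Lemma reduce_per (P t : R) : 0 < P ->
  exists z : int, 0 <= t + z%:~R * P < P.
Proof.
move=> P0; exists (- Num.floor (t / P)).
have h1 := Num.Theory.floor_le (t / P).
have h2 := Num.Theory.floorD1_gt (t / P).
rewrite intrD in h2.
have tq : t = (t / P) * P by rewrite divfK // gt_eqF.
move: h1 h2 tq; rewrite mulrNz.
move: (t / P) ((Num.floor (t / P))%:~R : R) => q k h1 h2 tq.
apply/andP; split; nra.
Qed.
End P.
Arguments mx_deriv_mul {R p q r X Y t DX DY}.
Arguments mx_deriv_add {R p q X Y t DX DY}.
Arguments mx_deriv_cst {R p q} C t.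
Arguments mx_deriv_ext {R p q X Y t D}.
Arguments mx_deriv_uniq {R p q X t D1 D2}.
Arguments ode_uniq {R p q G X t0}.
Arguments deriv_right0 {R f x D}.

Unset Implicit Arguments. Set Strict Implicit.

Theorem proposition2 (R : realType) (n m : nat) (T : R)
  (A : R -> 'M[R]_n) (B : R -> 'M[R]_(n, m))
  (Delta : 'cV[R]_n -> R -> 'cV[R]_m)
  (K : R -> 'M[R]_(m, n))
  (Psi : R -> R -> 'M[R]_n)
  (c : nat) (L : R -> 'M[R]_n) (F : 'M[R]_n) (E : R -> 'M[R]_n)
  (Lam : 'M[R]_n) (Shat : 'M[R]_(m, n)) :
  0 < T ->
  mx_continuous A -> mx_bounded A -> mx_periodic T A ->
  mx_continuous B -> mx_bounded B -> mx_periodic T B ->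
  (exists M : R, forall y t i, `|Delta y t i 0| <= M) ->
  mx_continuous K -> mx_periodic T K ->
  is_state_transition (fun t => A t + B t *m K t) Psi ->
  exp_stable_tm Psi ->
  (0 < c)%N ->
  is_mexp F E ->
  (forall t, Psi t 0 = L t *m E t) ->
  (forall t, L t \in unitmx) ->
  mx_C1 L ->
  mx_periodic (c%:R * T) L ->
  \rank Lam = (n - m)%N ->
  (Lam *m F^T <= Lam)%MS ->
  \rank Shat = m ->
  Shat *m Lam^T = 0 ->
  (forall t, 0 <= t < c%:R * T -> \rank (Shat *m invmx (L t) *m B t) = m) ->
  forall (y : R -> 'cV[R]_n) (u : R -> 'cV[R]_m) (t0 : R),
    (forall t, t0 <= t ->
       mx_has_deriv y t (A t *m y t + B t *m (u t + Delta (y t) t))) ->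
    ((forall t, t0 <= t -> Shat *m invmx (L t) *m y t = 0) <->
     (Shat *m invmx (L t0) *m y t0 = 0 /\
      forall t, t0 <= t -> u t = K t *m y t - Delta (y t) t)).
Proof.
move=> T0 _ _ _ _ _ Bper _ _ _ [_ HPsi] _ c0 HE HPL Lunit [Ld [HLd _]] Lper
  rLam sLam rS S0 Hrank y u t0 Hy.
have [G SF] := @exists_G R n m F Lam Shat rLam sLam rS S0.
have Eunit := mexp_unit HE.
have Lrel : forall t, Ld t = (A t + B t *m K t) *m L t - L t *m F.
  move=> t.
  have H1 := HPsi t 0.
  have H2 : mx_has_deriv (fun s => Psi s 0) t (Ld t *m E t + L t *m (F *m E t)).
    apply: (mx_deriv_ext _ (mx_deriv_mul (HLd t) (HE.2 t))) => s.
    by rewrite HPL.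
  have H3 := mx_deriv_uniq H1 H2.
  rewrite HPL !mulmxA -mulmxDl in H3.
  have := congr1 (fun M => M *m invmx (E t)) H3.
  rewrite /= !mulmxK // => ->.
  by rewrite addrK.
have SBunit : forall t, Shat *m invmx (L t) *m B t \in unitmx.
  move=> t.
  have cT0 : 0 < c%:R * T by rewrite mulr_gt0 // ltr0n.
  have [z Hz] := reduce_per t cT0.
  rewrite -row_free_unit /row_free.
  have -> : L t = L (t + z%:~R * (c%:R * T)) by rewrite (per_int Lper).
  have -> : B t = B (t + z%:~R * (c%:R * T)).
    by rewrite mulrA -[c%:R]/(c%:~R : R) -intrM (per_int Bper).
  by rewrite Hrank.
have Hv : forall t, t0 <= t -> mx_has_deriv (fun s => Shat *m invmx (L s) *m y s) t
   (G *m (Shat *m invmx (L t) *m y t) +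
    Shat *m invmx (L t) *m B t *m (u t + Delta (y t) t - K t *m y t)).
  move=> t tt0.
  have H := mx_deriv_mul (mx_deriv_mul (mx_deriv_cst Shat t) (inv_deriv Lunit HLd t)) (Hy t tt0).
  have eqv : forall (D1 D2 : 'cV[R]_m), mx_has_deriv (fun s => Shat *m invmx (L s) *m y s) t D1 -> D1 = D2 ->
     mx_has_deriv (fun s => Shat *m invmx (L s) *m y s) t D2 by move=> D1 D2 ? <-.
  apply: (eqv _ _ H).
  rewrite Lrel.
  have key : invmx (L t) *m ((A t + B t *m K t) *m L t - L t *m F) *m invmx (L t)
     = invmx (L t) *m (A t + B t *m K t) - F *m invmx (L t).
    rewrite mulmxBr mulmxBl -!mulmxA mulmxV // mulmx1.
    by rewrite !mulmxA mulVmx // mul1mx.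
  rewrite key mul0mx add0r.
  rewrite !(mulmxDr, mulmxDl, mulmxBr, mulmxBl, mulmxN, mulNmx, mulmxA) -SF.
  move: (Shat *m invmx (L t) *m A t *m y t) (Shat *m invmx (L t) *m B t *m K t *m y t)
    (Shat *m F *m invmx (L t) *m y t) (Shat *m invmx (L t) *m B t *m u t)
    (Shat *m invmx (L t) *m B t *m Delta (y t) t) => a b f p d.
  by apply/matrixP => i j; rewrite !mxE; lra.
split.
  move=> Hz; split; first exact: Hz t0 (lexx t0).
  move=> t tt0.
  have D0 : G *m (Shat *m invmx (L t) *m y t) +
    Shat *m invmx (L t) *m B t *m (u t + Delta (y t) t - K t *m y t) = 0.
    apply/matrixP => i j; rewrite [RHS]mxE.
    apply: (deriv_right0 (Hv t tt0 i j)) => s ts.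
    by rewrite Hz ?(le_trans tt0 ts) // mxE.
  rewrite Hz // mulmx0 add0r in D0.
  have w0 : u t + Delta (y t) t - K t *m y t = 0.
    by rewrite -[LHS](mulKmx (SBunit t)) D0 mulmx0.
  by apply/eqP; rewrite -subr_eq0 opprB addrA w0.
move=> [v0 Hu] t tt0.
apply: (ode_uniq (G:=G) (X := fun s => Shat *m invmx (L s) *m y s) (t0:=t0)) _ v0 t tt0.
move=> s ts; have := Hv s ts.
by rewrite Hu // subrK subrr mulmx0 addr0.
Qed.
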